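(* Let $h$ be a hospital whose utility is proportional to total wage, i.e. $f_h(Y)=\gamma_h w_h(Y)$ for all $Y\subseteq X_h$ for some $\gamma_h>0$. Define $\mathrm{Ch}_h:2^{X_h}\to2^{X_h}$ as follows: given $X'\subseteq X_h$ (with $\mathrm{Ch}_h(\emptyset)=\emptyset$), sort $X'$ in non-decreasing order of wage (ties broken by a fixed order) as $x^{(1)},\dots,x^{(|X'|)}$; set $Y=\{x^{(|X'|)}\}$; for $i=1,\dots,|X'|-1$ add $x^{(i)}$ to $Y$ if $w_h(Y\cup\{x^{(i)}\})<1.5\,B_h$; return $Y$. Then $\mathrm{Ch}_h$ satisfies SUB, IRC and COM.
   Context: Hospital $h$ has a finite set $X_h$ of contracts $x$ with wages $x_W$, $0<x_W\le B_h$, where $B_h>0$ is its budget. $w_h(Y)=\sum_{x\in Y}x_W$ for $Y\subseteq X_h$. For $\mathrm{Ch}_h$ with $\mathrm{Ch}_h(Y)\subseteq Y$: SUB means for all $Y''\subseteq Y'\subseteq X_h$, $Y''\setminus\mathrm{Ch}_h(Y'')\subseteq Y'\setminus\mathrm{Ch}_h(Y')$; IRC means for $Y'\subseteq X_h$, $Y''\subseteq X_h\setminus Y'$, if $\mathrm{Ch}_h(Y'\cup Y'')\subseteq Y'$ then $\mathrm{Ch}_h(Y')=\mathrm{Ch}_h(Y'\cup Y'')$; COM means for all $Y''\subseteq Y'\subseteq X_h$ with $w_h(Y'')\le\max\{B_h,w_h(\mathrm{Ch}_h(Y'))\}$, $f_h(\mathrm{Ch}_h(Y'))\ge f_h(Y'')$.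 *)

(* Defs.v *)
From HB Require Import structures.
From mathcomp Require Import all_boot all_order all_algebra.
Set Implicit Arguments. Unset Strict Implicit. Unset Printing Implicit Defensive.
Import Order.TTheory GRing.Theory Num.Theory.
Local Open Scope ring_scope.

Definition wsum (R : numDomainType) (X : finType) (w : X -> R) (Y : {set X}) : R :=
  \sum_(x in Y) w x.

Definition wage_le (R : realDomainType) (X : finType) (w : X -> R) (r : X -> nat) : rel X :=
  fun x y => (w x < w y) || ((w x == w y) && (r x <= r y)%N).

Definition greedy_step (R : realFieldType) (X : finType) (w : X -> R) (B : R)
  (Y : {set X}) (x : X) : {set X} :=
  if wsum w (x |: Y) < (3 / 2) * B then x |: Y else Y.

(* The choice function of the statement: sort X' as x^(1..n), start with
   {x^(n)}, then try x^(1), ..., x^(n-1) in order. Ch(∅) = ∅. *)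
Definition Ch (R : realFieldType) (X : finType) (w : X -> R) (r : X -> nat) (B : R)
  (X' : {set X}) : {set X} :=
  match sort (wage_le w r) (enum X') with
  | [::] => set0
  | x :: t => foldl (greedy_step w B) [set last x t] (belast x t)
  end.

Definition SUB (X : finType) (C : {set X} -> {set X}) : Prop :=
  forall Y'' Y' : {set X}, Y'' \subset Y' -> (Y'' :\: C Y'') \subset (Y' :\: C Y').

Definition IRC (X : finType) (C : {set X} -> {set X}) : Prop :=
  forall Y' Y'' : {set X}, Y'' \subset ~: Y' ->
    C (Y' :|: Y'') \subset Y' -> C Y' = C (Y' :|: Y'').

Definition COM (R : realDomainType) (X : finType) (w : X -> R) (B : R)
  (f : {set X} -> R) (C : {set X} -> {set X}) : Prop :=
  forall Y'' Y' : {set X}, Y'' \subset Y' ->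
    wsum w Y'' <= Num.max B (wsum w (C Y')) -> f Y'' <= f (C Y').

(* Main.v *)
Require Import Defs.
From HB Require Import structures.
From mathcomp Require Import all_boot all_order all_algebra.
From mathcomp Require Import lra.
Set Implicit Arguments. Unset Strict Implicit. Unset Printing Implicit Defensive.
Import Order.TTheory GRing.Theory Num.Theory.
Local Open Scope ring_scope.

Section Props.
Variables (R : realFieldType) (X : finType) (w : X -> R) (r : X -> nat) (B : R).
Hypothesis hw : forall x, 0 < w x.
Hypothesis hr : injective r.

Local Notation le := (wage_le w r).
Local Notation c := ((3 / 2) * B).

Lemma wle_refl x : le x x.
Proof. by rewrite /wage_le eqxx leqnn orbT. Qed.

Lemma wle_trans x y z : le x y -> le y z -> le x z.
Proof.
rewrite /wage_le => /orP[h1|/andP[/eqP e1 h1]] /orP[h2|/andP[/eqP e2 h2]].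
- by rewrite (lt_trans h1 h2).
- by rewrite -e2 h1.
- by rewrite e1 h2.
- by rewrite e1 e2 eqxx (leq_trans h1 h2) orbT.
Qed.

Lemma wle_anti x y : le x y -> le y x -> x = y.
Proof.
rewrite /wage_le => /orP[h1|/andP[/eqP e1 h1]] /orP[h2|/andP[/eqP e2 h2]].
- by move: (lt_trans h1 h2); rewrite ltxx.
- by move: h1; rewrite e2 ltxx.
- by move: h2; rewrite e1 ltxx.
- by apply: hr; apply/eqP; rewrite eqn_leq h1 h2.
Qed.

Lemma wle_total x y : le x y || le y x.
Proof.
rewrite /wage_le; case: (ltgtP (w x) (w y)) => h //=.
all: by rewrite ?orbT ?leq_total.
Qed.

Lemma le_w x y : le x y -> w x <= w y.
Proof. by rewrite /wage_le => /orP[/ltW //|/andP[/eqP -> _]]. Qed.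

Lemma wsum_ge0 (A : {set X}) : 0 <= wsum w A.
Proof. by apply: sumr_ge0 => i _; apply: ltW. Qed.

Lemma wsumU1 a (A : {set X}) : a \notin A -> wsum w (a |: A) = w a + wsum w A.
Proof. by move=> h; rewrite /wsum big_setU1. Qed.

Lemma wsum_sub (A C : {set X}) : A \subset C -> wsum w A <= wsum w C.
Proof.
move=> sAC; rewrite /wsum [X in _ <= X](big_setID A) /= (setIidPr sAC).
by rewrite lerDl; apply: wsum_ge0.
Qed.

Definition ismax (M : {set X}) m := m \in M /\ forall y, y \in M -> le y m.

Lemma max_uniq (M : {set X}) m m' : ismax M m -> ismax M m' -> m = m'.
Proof. by move=> [h1 h2] [h3 h4]; apply: wle_anti; [apply: h4|apply: h2]. Qed.

Lemma exists_min (P : pred X) x0 : P x0 -> exists x, P x /\ forall y, P y -> le x y.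
Proof.
move=> Px0.
case: (arg_minnP (fun x => #|[set y | le y x]|) Px0) => x Px hmin.
exists x; split => // y Py.
case: (boolP (le x y)) => // nxy.
have hyx : le y x by move: (wle_total x y); rewrite (negbTE nxy).
have := hmin y Py; rewrite leqNgt => /negP; case.
apply: proper_card; apply/properP; split.
  by apply/subsetP => z; rewrite !inE => h; apply: wle_trans h hyx.
by exists x; rewrite !inE ?wle_refl.
Qed.


Definition pre (M : {set X}) z := [set y in M | le y z].
Definition CF (M : {set X}) m :=
  [set z in M | (z == m) || (wsum w (m |: pre M z) < c)].

Lemma CF_sub M m : CF M m \subset M.
Proof. by apply/subsetP => z; rewrite inE => /andP[]. Qed.

Lemma CF_m (M : {set X}) m : m \in M -> m \in CF M m.
Proof. by move=> mM; rewrite inE mM eqxx. Qed.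

Lemma K M m z : ismax M m -> z \in M -> z \notin CF M m ->
  c <= w z + wsum w (m |: [set y in CF M m | le y z && (y != z)]).
Proof.
move=> [mM hm] zM zN.
have := @exists_min (fun y => (y \in M) && (y \notin CF M m)) z.
rewrite zM zN => /(_ isT) [y0 [/andP[y0M y0N] hy0]].
have y0z : le y0 z by apply: hy0; rewrite zM zN.
have y0m : y0 != m by apply: contraNneq y0N => ->; apply: CF_m.
have hc : c <= wsum w (m |: pre M y0).
  by move: y0N; rewrite inE y0M (negbTE y0m) /= -leNgt.
set Q := [set y in M | le y y0 && (y != y0)].
have preE : pre M y0 = y0 |: Q.
  apply/setP => y; rewrite !inE; case: eqVneq => [->|_] /=.
    by rewrite y0M wle_refl.
  by rewrite andbT.
have y0Q : y0 \notin Q by rewrite inE eqxx !andbF.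
have mpre : m \notin y0 |: Q.
  rewrite !inE negb_or eq_sym y0m /=; apply/negP => /andP[_ /andP[my0 _]].
  by move: y0m; rewrite (wle_anti my0 (hm y0 y0M)) eqxx.
set T := [set y in CF M m | le y z && (y != z)].
have QT : Q \subset T.
  apply/subsetP => y; rewrite inE => /andP[yM /andP[yy0 ny]].
  have yC : y \in CF M m.
    apply/negPn/negP => yN; have := hy0 y; rewrite yM yN => /(_ isT) h.
    by rewrite (wle_anti yy0 h) eqxx in ny.
  rewrite inE yC (wle_trans yy0 y0z) /=.
  apply/negP => /eqP e; subst y.
  by move: ny; rewrite (wle_anti yy0 y0z) eqxx.
have mT : m \notin T.
  rewrite inE; apply/negP => /andP[_ /andP[mz nmz]].
  have e := wle_anti mz (hm z zM); subst z.
  by move: zN; rewrite CF_m.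
rewrite preE wsumU1 // wsumU1 // in hc.
rewrite wsumU1 //.
have := le_w y0z; have := wsum_sub QT; lra.
Qed.


Lemma CF_step M m a : ismax M m -> a \notin M -> le a m ->
  (forall y, y \in M -> y != m -> le y a) ->
  greedy_step w B (CF M m) a = CF (a |: M) m.
Proof.
move=> [mM hm] aM am hya.
have am' : a != m by apply: contraNneq aM => ->.
have preM z : z \in M -> z != m -> pre (a |: M) z = pre M z.
  move=> zM zm; apply/setP => y; rewrite !inE; case: eqVneq => [->|_] //=.
  rewrite (negbTE aM) /=; apply/negbTE/negP => az; have e := wle_anti az (hya z zM zm); subst z.
  by rewrite zM in aM.
have preA : pre (a |: M) a = a |: (M :\ m).
  apply/setP => y; rewrite !inE; case: eqVneq => [->|ya] /=; first by rewrite wle_refl.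
  case: eqVneq => [->|ym] /=.
    by apply/negP => /andP[_ ma]; move: am'; rewrite (wle_anti am ma) eqxx.
  by case: (boolP (y \in M)) => yM //=; rewrite hya.
have SE : m |: (a |: (M :\ m)) = a |: M.
  apply/setP => z; rewrite !inE; case: (eqVneq z m) => [->|zm] /=.
    by rewrite mM orbT.
  by [].
have CFE : CF (a |: M) m =
    if wsum w (m |: pre (a |: M) a) < c then a |: CF M m else CF M m.
  apply/setP => z; case: ifP => h; rewrite !inE; case: (eqVneq z a) => [->|za] /=.
  - by rewrite h orbT.
  - case: (boolP (z \in M)) => zM //=; case: eqVneq => zm //=.
    by rewrite preM.
  - by rewrite (negbTE am') h (negbTE aM).
  - case: (boolP (z \in M)) => zM //=; case: eqVneq => zm //=.
    by rewrite preM.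
have aC : a \notin CF M m by apply: contra aM; apply: (subsetP (CF_sub M m)).
have hiff : (wsum w (a |: CF M m) < c) = (wsum w (m |: pre (a |: M) a) < c).
  rewrite preA SE; apply/idP/idP => h.
    case: (boolP (M \subset CF M m)) => sub.
      have e : CF M m = M by apply/eqP; rewrite eqEsubset sub CF_sub.
      by rewrite -e.
    case/subsetPn: sub => z zM zN.
    have hK := K (conj mM hm) zM zN.
    have zm : z != m by apply: contraNneq zN => ->; apply: CF_m.
    have wz := le_w (hya z zM zm).
    have sub2 : m |: [set y in CF M m | le y z && (y != z)] \subset CF M m.
      apply/subsetP => y; rewrite !inE => /orP[/eqP->|/andP[]//].
      by rewrite mM eqxx.
    have := wsum_sub sub2; move: h; rewrite wsumU1 //; lra.
  apply: le_lt_trans h; apply: wsum_sub; apply/setUS.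
  exact: CF_sub.
by rewrite /greedy_step CFE hiff.
Qed.

Lemma fold_CF m l : uniq l -> m \notin l -> pairwise le l ->
  (forall y, y \in l -> le y m) ->
  foldl (greedy_step w B) [set m] l = CF (m |: [set y in l]) m.
Proof.
elim/last_ind: l => [|l a IH].
  by move=> *; apply/setP => z; rewrite !inE; case: eqVneq.
rewrite rcons_uniq mem_rcons inE negb_or pairwise_rcons.
move=> /andP[al ul] /andP[ma ml] /andP[all_a pl] hm.
rewrite foldl_rcons IH //; last by move=> y yl; apply: hm; rewrite mem_rcons inE yl orbT.
have -> : m |: [set y in rcons l a] = a |: (m |: [set y in l]).
  apply/setP => z; rewrite !inE mem_rcons inE.
  by case: (z == m); case: (z == a).
apply: CF_step.
- split; first by rewrite !inE eqxx.
  move=> y; rewrite !inE => /orP[/eqP->|yl]; first exact: wle_refl.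
  by apply: hm; rewrite mem_rcons inE yl orbT.
- by rewrite !inE negb_or eq_sym ma al.
- by apply: hm; rewrite mem_rcons inE eqxx.
- move=> y; rewrite !inE => /orP[/eqP->|yl]; first by rewrite eqxx.
  by move=> _; exact: (allP all_a y yl).
Qed.

Lemma Ch_set0 : Ch w r B set0 = set0.
Proof. by rewrite /Ch enum_set0. Qed.

Lemma Ch_char M : M != set0 -> exists m, ismax M m /\ Ch w r B M = CF M m.
Proof.
move=> /set0Pn [x0 x0M].
rewrite /Ch.
have tr : transitive le by move=> ? ? ? h1 h2; apply: wle_trans h1 h2.
have hs : sorted le (sort le (enum M)) := sort_sorted wle_total _.
have us : uniq (sort le (enum M)) by rewrite sort_uniq enum_uniq.
have ms : sort le (enum M) =i M by move=> y; rewrite mem_sort mem_enum.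
move: hs us ms; case: (sort le (enum M)) => [|x t] hs us ms.
  by move: (ms x0); rewrite x0M in_nil.
move: hs us ms; rewrite lastI.
set l := belast x t; set m := last x t => hs us ms.
rewrite (sorted_pairwise tr) pairwise_rcons in hs.
case/andP: hs => alm pl; rewrite rcons_uniq in us; case/andP: us => ml ul.
have hm : forall y, y \in l -> le y m := fun y yl => allP alm y yl.
have Mmax : ismax M m.
  split; first by rewrite -ms mem_rcons mem_head.
  move=> y; rewrite -ms mem_rcons inE => /orP[/eqP->|/hm //]; exact: wle_refl.
exists m; split => //.
rewrite fold_CF //; congr CF; apply/setP => y.
by rewrite !inE -ms mem_rcons inE.
Qed.

Lemma Ch_CF M m : ismax M m -> Ch w r B M = CF M m.
Proof.
move=> hM; have : M != set0 by apply/set0Pn; exists m; case: hM.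
case/Ch_char => m' [hM' ->]; by rewrite (max_uniq hM' hM).
Qed.


Lemma pre_sub (M N : {set X}) z : M \subset N -> pre M z \subset pre N z.
Proof.
move=> sMN; apply/subsetP => y; rewrite !inE => /andP[yM ->].
by rewrite (subsetP sMN y yM).
Qed.

Lemma SUB_Ch : SUB (Ch w r B).
Proof.
move=> Y2 Y1 sub; apply/subsetP => x; rewrite !inE => /andP[xN2 xY2].
have xY1 := subsetP sub x xY2.
have n2 : Y2 != set0 by apply/set0Pn; exists x.
have n1 : Y1 != set0 by apply/set0Pn; exists x.
have [m2 [[m2Y h2] e2]] := Ch_char n2.
have [m1 [[m1Y h1] e1]] := Ch_char n1.
rewrite xY1 andbT; rewrite e2 in xN2; rewrite e1.
move: xN2; rewrite inE xY2 /= negb_or -leNgt => /andP[xm2 hc2].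
case: (eqVneq x m1) => [xm1|xm1].
  subst x; have hmax : ismax Y2 m1.
    by split => // y yY; apply: h1; apply: (subsetP sub).
  by rewrite (max_uniq hmax (conj m2Y h2)) eqxx in xm2.
rewrite inE xY1 /= (negbTE xm1) /= -leNgt.
have m2p : m2 \notin pre Y2 x.
  rewrite inE negb_and m2Y /=; apply/negP => mx.
  by rewrite (wle_anti mx (h2 x xY2)) eqxx in xm2.
have m1p : m1 \notin pre Y1 x.
  rewrite inE negb_and m1Y /=; apply/negP => mx.
  by rewrite (wle_anti mx (h1 x xY1)) eqxx in xm1.
rewrite !wsumU1 // in hc2 *.
have := le_w (h1 m2 (subsetP sub m2 m2Y)).
have := wsum_sub (pre_sub x sub).
lra.
Qed.

Lemma IRC_Ch : IRC (Ch w r B).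
Proof.
move=> Y1 Y2 d hsub.
set Z := Y1 :|: Y2.
case: (eqVneq Z set0) => [Z0|Zn].
  have -> : Y1 = set0 by apply/eqP; rewrite -subset0 -Z0 subsetUl.
  by rewrite -/Z Z0.
have [m [hm e]] := Ch_char Zn.
rewrite e in hsub *.
have mY1 : m \in Y1 := subsetP hsub m (CF_m (hm.1)).
have hm1 : ismax Y1 m.
  by split => // y yY; apply: hm.2; rewrite /Z inE yY.
rewrite (Ch_CF hm1); apply/setP => z.
case: (boolP (z \in Y1)) => zY1; last first.
  apply/idP/idP => h.
    by have := subsetP (CF_sub _ _) _ h; rewrite (negbTE zY1).
  by have := subsetP hsub _ h; rewrite (negbTE zY1).
have zZ : z \in Z by rewrite /Z inE zY1.
rewrite [in LHS]inE [in RHS]inE zY1 zZ /=.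
case: eqVneq => zm //=.
apply/idP/idP => h1; last first.
  apply: le_lt_trans h1; apply: wsum_sub; apply: setUS; apply: pre_sub.
  exact: subsetUl.
apply/negPn/negP => hN.
have zN : z \notin CF Z m by rewrite inE zZ (negbTE zm) /=.
have hK := K hm zZ zN.
set T := [set y in CF Z m | le y z && (y != z)] in hK.
have zT : z \notin m |: T by rewrite in_setU1 (negbTE zm) /= inE eqxx !andbF.
have sub3 : z |: (m |: T) \subset m |: pre Y1 z.
  apply/subsetP => y; rewrite in_setU1 => /orP[/eqP->|].
    by rewrite in_setU1 inE zY1 wle_refl orbT.
  rewrite in_setU1 => /orP[/eqP->|yT]; first by rewrite in_setU1 eqxx.
  rewrite inE in yT; case/andP: yT => yC /andP[yz _].
  by rewrite in_setU1 inE (subsetP hsub y yC) yz orbT.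
have := wsum_sub sub3; rewrite wsumU1 //; lra.
Qed.

Hypothesis hB : forall x, w x <= B.

Lemma COM_w (Y2 Y1 : {set X}) : Y2 \subset Y1 ->
  wsum w Y2 <= Num.max B (wsum w (Ch w r B Y1)) ->
  wsum w Y2 <= wsum w (Ch w r B Y1).
Proof.
move=> sub hmax.
case: (eqVneq Y1 set0) => [Y0|Yn].
  subst Y1; move: sub; rewrite subset0 => /eqP->.
  by rewrite Ch_set0.
have [m [[mY hm] e]] := Ch_char Yn.
rewrite e in hmax *; set C := CF Y1 m.
move: hmax; rewrite le_max => /orP[hY2|//].
case: (leP B (wsum w C)) => hBC; first exact: le_trans hY2 hBC.
case: (boolP (Y2 \subset C)) => sC; first exact: wsum_sub.
have big v : v \in Y1 -> v \notin C -> B / 2 < w v.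
  move=> vY vN; have hK := K (conj mY hm) vY vN.
  have sub2 : m |: [set y in CF Y1 m | le y v && (y != v)] \subset C.
    apply/subsetP => y; rewrite !inE => /orP[/eqP->|/andP[]//].
    by rewrite mY eqxx.
  have := wsum_sub sub2; lra.
have mC : m \in C by apply: CF_m.
case/subsetPn: sC => u uY2 uC.
have uY1 := subsetP sub u uY2.
have hu := big u uY1 uC.
have wum := le_w (hm u uY1).
have um : u != m by apply: contraNneq uC => ->.
case: (boolP (m \in Y2)) => mY2.
  have s2 : u |: [set m] \subset Y2.
    by apply/subsetP => y; rewrite !inE => /orP[]/eqP->.
  have := wsum_sub s2; rewrite wsumU1; last by rewrite inE.
  rewrite /wsum big_set1 -/(wsum w Y2); lra.
have eY2 : wsum w Y2 = w u + wsum w (Y2 :\ u).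
  by rewrite -{1}(setD1K uY2) wsumU1 // setD11.
case: (boolP (Y2 :\ u \subset C)) => sC2.
  have s3 : Y2 :\ u \subset C :\ m.
    apply/subsetP => y yY; rewrite in_setD1 (subsetP sC2 y yY) andbT.
    by apply: contraNneq mY2 => <-; move: yY; rewrite inE => /andP[].
  have eC : wsum w C = w m + wsum w (C :\ m).
    by rewrite -{1}(setD1K mC) wsumU1 // setD11.
  have := wsum_sub s3; lra.
case/subsetPn: sC2 => v vY vC.
have vY2 : v \in Y2 by move: vY; rewrite in_setD1 => /andP[_ ->].
have vu : v != u by move: vY; rewrite in_setD1 => /andP[-> _].
have hv := big v (subsetP sub v vY2) vC.
have s2 : u |: [set v] \subset Y2.
  by apply/subsetP => y; rewrite !inE => /orP[]/eqP->.
have := wsum_sub s2; rewrite wsumU1; last by rewrite inE eq_sym.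
rewrite /wsum big_set1 -/(wsum w Y2); lra.
Qed.

End Props.

Theorem lemma7 (R : realFieldType) (X : finType) (w : X -> R) (B : R)
  (r : X -> nat) (gamma : R) (f : {set X} -> R) :
  0 < B ->
  (forall x, 0 < w x /\ w x <= B) ->
  injective r ->
  0 < gamma ->
  (forall Y : {set X}, f Y = gamma * wsum w Y) ->
  [/\ SUB (Ch w r B), IRC (Ch w r B) & COM w B f (Ch w r B)].
Proof.
move=> B0 hwB hr g0 hf.
have hw x : 0 < w x by case: (hwB x).
have hB x : w x <= B by case: (hwB x).
split.
- exact: SUB_Ch.
- exact: IRC_Ch.
- move=> Y2 Y1 sub hmax; rewrite !hf ler_pM2l //.
  exact: (@COM_w R X w r B hw hr Y2 Y1 sub hmax).
Qed.
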